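(* Let $X$ be a countably compact non-compact space with linear Lindelöf number $\kappa\ge\omega_1$, and let $Y$ be an $[\aleph_0,\kappa]$-compact C-closed space. Then: (a) for each continuous $f:X\to Y$, $f(X)$ is compact and there is $c\in Y$ such that $f^{-1}(\{c\})$ is non-Lindelöf; (b) if $X$ satisfies $\mathsf{IC}$ and $Y$ has $G_\delta$ points, then $\mathsf{EC}(X,Y)$ holds; (c) if $X$ satisfies $\mathsf{I0}$ and $Y$ is Tychonoff with $G_\delta$ points, then $\mathsf{EC}(X,Y)$ holds.
   Context: All spaces are Hausdorff and maps continuous. The linear Lindelöf number of $X$ is the least $\kappa$ such that every cover of $X$ by open sets linearly ordered by inclusion has a subcover of cardinality $\le\kappa$. A space is $[\aleph_0,\kappa]$-compact if every open cover of cardinality $\le\kappa$ has a countable subcover. A space is C-closed if every countably compact subspace is closed. A $0$-set is $g^{-1}(\{0\})$ for a continuous $g:X\to[0,1]$. $X$ satisfies $\mathsf{IC}$ (resp. $\mathsf{I0}$) if of any two disjoint closed subsets (resp. $0$-sets) at least one is Lindelöf. For non-Lindelöf $X$, $\mathsf{EC}(X,Y)$ means: for every continuous $f:X\to Y$ there is a Lindelöf $Z\subset X$ with $f(X\setminus Z)$ a singleton. *)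

(* Defs.v *)
From HB Require Import structures.
From mathcomp Require Import all_boot all_order all_algebra.
From mathcomp Require Import all_classical all_reals all_analysis.
From mathcomp Require Import Rstruct Rstruct_topology.
Set Implicit Arguments. Unset Strict Implicit. Unset Printing Implicit Defensive.
Import Order.TTheory GRing.Theory Num.Theory.
Local Open Scope classical_set_scope.
Local Open Scope ring_scope.
Local Open Scope card_scope.

(* All subspace notions below are for a subset A of a space T, covers being
   taken by open sets of T (equivalently, by relatively open sets of A). *)

Definition lindelof (T : topologicalType) (A : set T) : Prop :=
  forall C : set (set T), (forall U, C U -> open U) -> A `<=` \bigcup_(U in C) U ->
  exists D : set (set T), [/\ D `<=` C, countable D & A `<=` \bigcup_(U in D) U].

Definition countably_compact (T : topologicalType) (A : set T) : Prop :=
  forall C : set (set T), (forall U, C U -> open U) -> countable C ->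
  A `<=` \bigcup_(U in C) U ->
  exists D : set (set T), [/\ D `<=` C, finite_set D & A `<=` \bigcup_(U in D) U].

Definition lin_lindelof_le (X : topologicalType) (K : Type) (S : set K) : Prop :=
  forall C : set (set X), (forall U, C U -> open U) ->
  (forall U V, C U -> C V -> U `<=` V \/ V `<=` U) ->
  \bigcup_(U in C) U = [set: X] ->
  exists D : set (set X), [/\ D `<=` C, D #<= S & \bigcup_(U in D) U = [set: X]].

(* The linear Lindelof number of X is the cardinal |K|: the property holds for
   |K| and fails for every strictly smaller cardinal (all of which are
   represented by subsets of K). *)
Definition lin_lindelof_number (X : topologicalType) (K : Type) : Prop :=
  lin_lindelof_le X [set: K] /\
  forall S : set K, ~ ([set: K] #<= S) -> ~ lin_lindelof_le X S.

Definition aleph0_kappa_compact (Y : topologicalType) (K : Type) : Prop :=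
  forall C : set (set Y), (forall U, C U -> open U) -> C #<= [set: K] ->
  \bigcup_(U in C) U = [set: Y] ->
  exists D : set (set Y), [/\ D `<=` C, countable D & \bigcup_(U in D) U = [set: Y]].

Definition C_closed (Y : topologicalType) : Prop :=
  forall A : set Y, countably_compact A -> closed A.

Definition zero_set (X : topologicalType) (A : set X) : Prop :=
  exists g : X -> Rdefinitions.R, [/\ continuous g, (forall x, 0 <= g x <= 1) &
                        A = g @^-1` [set 0]].

Definition IC (X : topologicalType) : Prop :=
  forall A B : set X, closed A -> closed B -> A `&` B = set0 ->
  lindelof A \/ lindelof B.

Definition I0 (X : topologicalType) : Prop :=
  forall A B : set X, zero_set A -> zero_set B -> A `&` B = set0 ->
  lindelof A \/ lindelof B.

Definition Gdelta_points (Y : topologicalType) : Prop :=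
  forall y : Y, exists U : nat -> set Y,
    (forall n, open (U n)) /\ \bigcap_n U n = [set y].

Definition tychonoff_space (Y : topologicalType) : Prop :=
  (forall y : Y, closed [set y]) /\
  forall (A : set Y) (y : Y), closed A -> ~ A y ->
  exists g : Y -> Rdefinitions.R, [/\ continuous g, (forall z, 0 <= g z <= 1), g y = 0 &
                        forall z, A z -> g z = 1].

(* EC(X,Y) (meant for non-Lindelof X). *)
Definition EC (X Y : topologicalType) : Prop :=
  forall f : X -> Y, continuous f ->
  exists Z : set X, lindelof Z /\ exists c : Y, f @` (~` Z) = [set c].

(* Main.v *)
Require Import Defs.
From HB Require Import structures.
From mathcomp Require Import all_boot all_order all_algebra.
From mathcomp Require Import all_classical all_reals all_analysis.
From mathcomp Require Import Rstruct Rstruct_topology.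
From mathcomp Require Import lra.
Import GRing.Theory Num.Theory.
Set Implicit Arguments. Unset Strict Implicit. Unset Printing Implicit Defensive.
Local Open Scope classical_set_scope.

Definition ptop {T : topologicalType} (x : T) : Type := T.
HB.instance Definition _ (T : topologicalType) (x : T) := Topological.copy (ptop x) T.
HB.instance Definition _ (T : topologicalType) (x : T) := isPointed.Build (ptop x) x.

Lemma select_pre {A B : Type} (h : A -> B) (C : set A) (D' : set B) :
  D' `<=` h @` C -> exists D, [/\ D `<=` C, h @` D = D' & (D #<= D')%card].
Proof.
move=> sD.
have [[a0 _]|nA] := pselect (exists a : A, True); last first.
  exists set0; split; [by []| |exact: card_ge0].
  rewrite image_set0; apply/seteqP; split => // W /sD [a]; by have := nA (ex_intro _ a I).
have [g Hg] : {g : B -> A & forall W, D' W -> C (g W) /\ h (g W) = W}.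
  apply: (@choice _ _ (fun W a => D' W -> C a /\ h a = W)) => W.
  have [/sD [a Ca <-]|nW] := pselect (D' W); first by exists a.
  by exists a0.
exists (g @` D'); split.
- by move=> _ [W /Hg [] ? _ <-].
- apply/seteqP; split; first by move=> _ [_ [W DW <-] <-]; rewrite (Hg _ DW).2.
  by move=> W DW; exists (g W); [exists W|rewrite (Hg _ DW).2].
- exact: card_image_le.
Qed.

Lemma countable_setU2 T (A B : set T) : countable A -> countable B -> countable (A `|` B).
Proof.
move=> cA cB.
have -> : A `|` B = \bigcup_(i in [set: bool]) (if i then A else B).
  apply/seteqP; split => x.
    by case => ?; [exists true|exists false].
  by case => -[] _ ?; [left|right].
apply: bigcup_countable; first exact: countableP.
by case.
Qed.

Lemma finite_chain_max T (D : set (set T)) : finite_set D -> D !=set0 ->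
  total_on D subset -> exists M, D M /\ forall U, D U -> U `<=` M.
Proof.
move=> /finite_seqP [s ->]; elim: s => [|a s IH]; first by case=> x /=; rewrite in_nil.
move=> _ tot; case: s IH tot => [|b s] IH tot.
  exists a; split; first by rewrite /= mem_seq1.
  by move=> U /=; rewrite mem_seq1 => /eqP ->.
have ne : [set` b :: s] !=set0 by exists b; rewrite /= inE eqxx.
have tot' : total_on [set` b :: s] subset.
  by move=> U V /= Us Vs; apply: tot => /=; rewrite inE ?Us ?Vs orbT.
have [M [Ms MU]] := IH ne tot'.
have [aM|Ma] := tot a M ltac:(by rewrite /= inE eqxx) ltac:(by rewrite /= inE Ms orbT).
  exists M; split; first by rewrite /= inE Ms orbT.
  by move=> U /=; rewrite inE => /orP[/eqP ->//|/MU].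
exists a; split; first by rewrite /= inE eqxx.
move=> U /=; rewrite inE => /orP[/eqP ->//|/MU UM]; exact: subset_trans Ma.
Qed.

Definition opens (T : topologicalType) (C : set (set T)) := forall U, C U -> open U.

Lemma fincover_compact (T : topologicalType) (A : set T) :
  (forall C : set (set T), opens C -> A `<=` \bigcup_(U in C) U ->
    exists D, [/\ D `<=` C, finite_set D & A `<=` \bigcup_(U in D) U]) -> compact A.
Proof.
move=> H.
have [[x _]|nT] := pselect (exists x : T, True); last first.
  have -> : A = set0 by apply/seteqP; split => // y; have := nT (ex_intro _ y I).
  exact: compact0.
have E := @compact_cover (ptop x).
change (@compact (ptop x) A); rewrite E.
move=> I D f fo cov.
have o1 : opens (f @` D) by move=> _ [i Di <-]; exact: fo.
have c1 : A `<=` \bigcup_(U in f @` D) U.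
  by move=> y /cov [i Di fy]; exists (f i) => //; exists i.
have [D0 [D0s D0f D0c]] := H (f @` D) o1 c1.
have [D1 [D1D D1e D1c]] := select_pre D0s.
have /finite_fsetP [s Es] : finite_set D1 by exact: card_le_finite D1c D0f.
exists s.
  by move=> i si; rewrite inE; apply: D1D; rewrite Es.
move=> y /D0c [U]; rewrite -D1e => -[i D1i <-] fiy.
by exists i => //; rewrite -Es.
Qed.
Lemma chain_fincover (T : topologicalType) (A : set T) :
  (forall C : set (set T), opens C -> total_on C subset ->
     A `<=` \bigcup_(U in C) U -> exists U, C U /\ A `<=` U) ->
  forall C : set (set T), opens C -> A `<=` \bigcup_(U in C) U ->
    exists D, [/\ D `<=` C, finite_set D & A `<=` \bigcup_(U in D) U].
Proof.
move=> H C0 oC0 cov0; apply: contrapT => nfin.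
pose P := [set V : set T | open V /\ ~ exists D, [/\ D `<=` C0, finite_set D &
   A `<=` V `|` \bigcup_(U in D) U]].
have P0 : P set0.
  split; first exact: open0.
  move=> [D [DC Df DA]]; apply: nfin; exists D; split => // a /DA; by rewrite set0U.
have [M [PM Mmax]] : exists M, P M /\ forall B, M `<` B -> ~ P B.
  apply: Zorn_bigcup => F FP Ftot; split.
    by apply: bigcup_open => V /FP [].
  move=> [D [DC Df DA]].
  set W := \bigcup_(U in D) U.
  have oW : open W by apply: bigcup_open => U /DC /oC0.
  pose G := (fun V => V `|` W) @` (F `|` [set set0]).
  have oG : opens G.
    move=> _ [V [/FP [oV _]|->] <-]; apply: openU => //; exact: open0.
  have tG : total_on G subset.
    move=> _ _ [V1 h1 <-] [V2 h2 <-].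
    have : V1 `<=` V2 \/ V2 `<=` V1.
      case: h1 => [F1|->]; last by left.
      case: h2 => [F2|->]; last by right.
      exact: Ftot.
    by case=> s; [left|right]; exact: setSU.
  have cG : A `<=` \bigcup_(U in G) U.
    move=> a /DA [[V FV Va]|Wa].
      by exists (V `|` W); [exists V; [left|]|left].
    by exists (set0 `|` W); [exists set0; [right|]|right].
  have [_ [[V FV <-] AU]] := H G oG tG cG.
  case: FV => [FV|V0].
    by apply: (FP V FV).2; exists D.
  by apply: P0.2; exists D; rewrite -V0.
have AM : A `<=` M.
  move=> a Aa; apply: contrapT => nMa.
  have [U C0U Ua] := cov0 a Aa.
  apply: (Mmax (M `|` U)).
    split; first exact: subsetUl.
    by move=> sub; apply: nMa; apply: sub; right.
  split; first by apply: openU; [exact: PM.1|exact: oC0].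
  move=> [D [DC Df DA]]; apply: PM.2; exists (D `|` [set U]); split.
  - by move=> V [/DC|->].
  - by rewrite finite_setU; split => //; exact: finite_set1.
  - move=> a' /DA [[Ma'|Ua']|[V DV Va']]; first by left.
      by right; exists U => //; right.
    by right; exists V => //; left.
apply: PM.2; exists set0; split; [by []|exact: finite_set0|].
by move=> a /AM; left.
Qed.

Lemma cc_image (X Y : topologicalType) (f : X -> Y) (A : set X) :
  continuous f -> countably_compact A -> countably_compact (f @` A).
Proof.
move=> fc ccA C oC cC cov.
pose h := fun V : set Y => f @^-1` V.
have oC' : forall U, (h @` C) U -> open U.
  move=> _ [V CV <-]; apply: open_comp; [move=> x _; exact: fc|exact: oC].
have cC' : countable (h @` C) by exact: sub_countable (card_image_le _ _) cC.
have cov' : A `<=` \bigcup_(U in h @` C) U.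
  move=> x Ax; have [V CV Vx] := cov (f x) (imageP f Ax).
  by exists (h V) => //; exists V.
have [D' [D'C D'f D'A]] := ccA _ oC' cC' cov'.
have [D [DC De Dc]] := select_pre D'C.
exists D; split => //; first exact: card_le_finite Dc D'f.
move=> _ [x Ax <-]; have [W D'W Wx] := D'A x Ax.
by rewrite -De in D'W; case: D'W => V DV hV; exists V => //; rewrite -hV in Wx.
Qed.

Lemma cc_closed_sub (X : topologicalType) (F : set X) :
  countably_compact [set: X] -> closed F -> countably_compact F.
Proof.
move=> cc cF C oC cC cov.
have o' : forall U, (C `|` [set ~` F]) U -> open U.
  by move=> U [/oC|->] //; exact: closed_openC.
have c' : countable (C `|` [set ~` F]) by apply: countable_setU2 => //; exact: countable1.
have cov' : [set: X] `<=` \bigcup_(U in C `|` [set ~` F]) U.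
  move=> x _; have [Fx|nFx] := pselect (F x).
    by have [U CU Ux] := cov x Fx; exists U => //; left.
  by exists (~` F) => //; right.
have [D [DC Df DA]] := cc _ o' c' cov'.
exists (D `&` C); split; first by move=> U [].
  exact: sub_finite_set (@subIsetl _ _ _) Df.
move=> x Fx; have [U DU Ux] := DA x I.
exists U => //; split => //; case: (DC U DU) => // UF.
by rewrite UF in Ux.
Qed.

Lemma lind_fincover (X : topologicalType) (A : set X) :
  countably_compact [set: X] -> closed A -> lindelof A ->
  forall C : set (set X), opens C -> A `<=` \bigcup_(U in C) U ->
    exists D, [/\ D `<=` C, finite_set D & A `<=` \bigcup_(U in D) U].
Proof.
move=> cc cA lA C oC cov.
have [D [DC Dc DA]] := lA C oC cov.
have [E [ED Ef EA]] := cc_closed_sub cc cA (fun U DU => oC U (DC U DU)) Dc DA.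
by exists E; split => // U /ED /DC.
Qed.

Lemma closed_sub_lindelof (X : topologicalType) (A B : set X) :
  closed A -> A `<=` B -> lindelof B -> lindelof A.
Proof.
move=> cA AB lB C oC cov.
have o' : forall U, (C `|` [set ~` A]) U -> open U.
  by move=> U [/oC|->] //; exact: closed_openC.
have cov' : B `<=` \bigcup_(U in C `|` [set ~` A]) U.
  move=> x _; have [Ax|nAx] := pselect (A x).
    by have [U CU Ux] := cov x Ax; exists U => //; left.
  by exists (~` A) => //; right.
have [D [DC Dc DA]] := lB _ o' cov'.
exists (D `&` C); split; first by move=> U [].
  exact: sub_countable (subset_card_le (@subIsetl _ _ _)) Dc.
move=> x Ax; have [U DU Ux] := DA x (AB x Ax).
exists U => //; split => //; case: (DC U DU) => // UF.
by rewrite UF in Ux.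
Qed.

Lemma lindelof_bigcup (X : topologicalType) (L : nat -> set X) :
  (forall n, lindelof (L n)) -> lindelof (\bigcup_n L n).
Proof.
move=> lL C oC cov.
have [Dn HD] : {Dn : nat -> set (set X) & forall n,
    [/\ Dn n `<=` C, countable (Dn n) & L n `<=` \bigcup_(U in Dn n) U]}.
  apply: (@choice _ _ (fun n D => [/\ D `<=` C, countable D & L n `<=` \bigcup_(U in D) U])).
  move=> n; have cn : L n `<=` \bigcup_(U in C) U.
    by move=> x Lx; apply: cov; exists n.
  exact: (lL n C oC cn).
exists (\bigcup_n Dn n); split.
- by move=> U [n _]; case: (HD n) => + _ _; apply.
- by apply: bigcup_countable => // n _; case: (HD n).
- move=> x [n _ Lx]; have [_ _ /(_ x Lx) [U DU Ux]] := HD n.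
  by exists U => //; exists n.
Qed.

Lemma lindelof0 (X : topologicalType) : lindelof (@set0 X).
Proof. by move=> C _ _; exists set0; split => //; exact: countable0. Qed.

Lemma range_compact (X Y : topologicalType) (K : Type) (f : X -> Y) (x0 : X) :
  countably_compact [set: X] -> lin_lindelof_le X [set: K] ->
  aleph0_kappa_compact Y K -> C_closed Y -> continuous f -> compact (range f).
Proof.
move=> ccX LL AK CC fc.
have ccR : countably_compact (range f) by exact: cc_image.
have clR : closed (range f) by exact: CC.
apply: fincover_compact; apply: chain_fincover => C oC tC cov.
pose h := fun V : set Y => f @^-1` V.
have oC' : forall U, (h @` C) U -> open U.
  move=> _ [V CV <-]; apply: open_comp; [move=> x _; exact: fc|exact: oC].
have tC' : forall U V, (h @` C) U -> (h @` C) V -> U `<=` V \/ V `<=` U.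
  move=> _ _ [U CU <-] [V CV <-].
  by case: (tC U V CU CV) => s; [left|right] => x /=; apply: s.
have cC' : \bigcup_(U in h @` C) U = [set: X].
  apply/seteqP; split => // x _.
  have [V CV Vx] := cov (f x) (imageT f x).
  by exists (h V) => //; exists V.
have [D' [D'C D'K D'c]] := LL _ oC' tC' cC'.
have [D [DC De Dc]] := select_pre D'C.
pose g := fun V : set Y => V `|` ~` range f.
have oE : forall U, (g @` D) U -> open U.
  move=> _ [V DV <-]; apply: openU; [exact: oC (DC _ DV)|exact: closed_openC].
have EK : (g @` D #<= [set: K])%card.
  exact: card_le_trans (card_image_le _ _) (card_le_trans Dc D'K).
have inD : forall x, exists2 V, D V & V (f x).
  move=> x; have : [set: X] x by [].
  rewrite -D'c => -[W D'W Wx]; rewrite -De in D'W; case: D'W => V DV hV.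
  by exists V => //; rewrite -hV in Wx.
have Ec : \bigcup_(U in g @` D) U = [set: Y].
  apply/seteqP; split => // y _.
  have [[x _ <-]|ny] := pselect (range f y).
    by have [V DV Vx] := inD x; exists (g V); [exists V|left].
  by have [V DV _] := inD x0; exists (g V); [exists V|right].
have [E' [E'E E'c E'cov]] := AK _ oE EK Ec.
have [D2 [D2D D2e D2c]] := select_pre E'E.
have oD2 : forall U, D2 U -> open U by move=> U /D2D /DC /oC.
have cD2 : countable D2 by exact: sub_countable D2c E'c.
have covD2 : range f `<=` \bigcup_(U in D2) U.
  move=> y Ry; have : [set: Y] y by [].
  rewrite -E'cov => -[U E'U Uy]; rewrite -D2e in E'U.
  case: E'U => V D2V gV; rewrite -gV in Uy; case: Uy => // Vy.
  by exists V.
have [D3 [D3D2 D3f D3c]] := ccR _ oD2 cD2 covD2.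
have ne : D3 !=set0.
  by have [V D3V _] := D3c (f x0) (imageT f x0); exists V.
have tot : total_on D3 subset.
  move=> U V /D3D2/D2D/DC CU /D3D2/D2D/DC CV; exact: tC.
have [M [D3M MU]] := finite_chain_max D3f ne tot.
exists M; split; first exact: DC (D2D _ (D3D2 _ D3M)).
by move=> y /D3c [U D3U Uy]; exact: MU U D3U y Uy.
Qed.

Lemma fiber_nonlindelof (X Y : topologicalType) (f : X -> Y) :
  hausdorff_space Y -> countably_compact [set: X] -> ~ compact [set: X] ->
  C_closed Y -> continuous f -> compact (range f) ->
  exists c : Y, ~ lindelof (f @^-1` [set c]).
Proof.
move=> hY ccX ncX CC fc Rc.
apply: contrapT => nex.
have allL : forall c, lindelof (f @^-1` [set c]).
  by move=> c; apply: contrapT => nL; apply: nex; exists c.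
apply: ncX => F PF _.
have FR : (f @ F) (range f).
  change (F (f @^-1` range f)).
  by apply: filterS filterT => x _; exists x.
have [y [Ry cly]] := Rc (f @ F) _ FR.
pose Phi := f @^-1` [set y].
have clPhi : closed Phi.
  apply: preimage_closed; first by move=> x _; exact: fc.
  exact/accessible_closed_set1/hausdorff_accessible.
have cPhi : compact Phi.
  exact: fincover_compact (lind_fincover ccX clPhi (allL y)).
have key : forall B, F B -> exists x, closure B x /\ f x = y.
  move=> B FB.
  have clfB : closed (f @` closure B).
    by apply: CC; apply: cc_image => //; apply: cc_closed_sub => //; exact: closed_closure.
  have : closure (f @` B) y.
    rewrite clusterE in cly; apply: cly.
    change (F (f @^-1` (f @` B))).
    by apply: filterS FB => x Bx; exists x.
  have sub : f @` B `<=` f @` closure B.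
    by move=> _ [x Bx <-]; exists x => //; exact: subset_closure.
  move=> /(closureS sub); rewrite -(closure_id _).1 //.
  by case=> x clx fxy; exists x.
pose H := filter_from F (fun B => closure B `&` Phi).
have HF : ProperFilter H.
  apply: (filter_from_proper (filter_from_filter _ _)).
  - by exists setT; exact: filterT.
  - move=> B1 B2 F1 F2; exists (B1 `&` B2); first exact: filterI.
    move=> x [clx Px]; split; split => //; apply: (closureS _ clx).
      exact: subIsetl.
    exact: subIsetr.
  - by move=> B FB; have [x [clx fx]] := key B FB; exists x.
have HPhi : H Phi by exists setT; [exact: filterT|move=> x []].
have [x [Phix clHx]] := cPhi H HF HPhi.
exists x; split => //.
rewrite clusterE => B FB.
have : closure (closure B `&` Phi) x.
  by rewrite clusterE in clHx; apply: clHx; exists B.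
move=> /(closureS (@subIsetl _ (closure B) Phi)).
by rewrite -(closure_id _).1 //; exact: closed_closure.
Qed.

Lemma EC_core (X Y : topologicalType) (f : X -> Y) (c : Y) (U : nat -> set Y) :
  \bigcap_n U n = [set c] -> ~ lindelof (f @^-1` [set c]) ->
  (forall n, exists L, [/\ lindelof L, f @^-1` (~` U n) `<=` L &
                           L `<=` ~` (f @^-1` [set c])]) ->
  exists Z : set X, lindelof Z /\ exists c : Y, f @` (~` Z) = [set c].
Proof.
move=> UE nL HL.
have [L HLn] : {L : nat -> set X & forall n, [/\ lindelof (L n),
    f @^-1` (~` U n) `<=` L n & L n `<=` ~` (f @^-1` [set c])]}.
  exact: (@choice _ _ (fun n L => [/\ lindelof L, f @^-1` (~` U n) `<=` L &
                           L `<=` ~` (f @^-1` [set c])])).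
exists (\bigcup_n L n); split.
  by apply: lindelof_bigcup => n; case: (HLn n).
exists c; apply/seteqP; split.
  move=> _ [x nZx <-]; apply: contrapT => nfx.
  have : ~ (\bigcap_n U n) (f x) by rewrite UE.
  move=> /existsNP [n /not_implyP [_ nU]].
  apply: nZx; exists n => //; case: (HLn n) => _ + _; apply; exact: nU.
move=> _ ->.
have [[x fx]|nx] := pselect (exists x, f x = c); last first.
  exfalso; apply: nL.
  have -> : f @^-1` [set c] = set0.
    by apply/seteqP; split => // x /= fx; apply: nx; exists x.
  exact: lindelof0.
exists x => // -[n _ Lx].
by case: (HLn n) => _ _ /(_ x Lx); apply.
Qed.

Unset Implicit Arguments.

Theorem theorem3p8 (X Y : topologicalType) (K : Type) :
  hausdorff_space X -> hausdorff_space Y ->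
  countably_compact [set: X] -> ~ compact [set: X] ->
  lin_lindelof_number X K -> ~ countable [set: K] ->
  aleph0_kappa_compact Y K -> C_closed Y ->
  (forall f : X -> Y, continuous f ->
     compact (range f) /\ exists c : Y, ~ lindelof (f @^-1` [set c])) /\
  (IC X -> Gdelta_points Y -> EC X Y) /\
  (I0 X -> tychonoff_space Y -> Gdelta_points Y -> EC X Y).
Proof.
move=> hX hY ccX ncX [LL _] _ AK CC.
have [x0 _] : exists x : X, True.
  apply: contrapT => nX; apply: ncX.
  have -> : [set: X] = set0.
    by apply/seteqP; split => // x _; apply: nX; exists x.
  exact: compact0.
have partA : forall f : X -> Y, continuous f ->
    compact (range f) /\ exists c : Y, ~ lindelof (f @^-1` [set c]).
  move=> f fc; have Rc := range_compact x0 ccX LL AK CC fc.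
  by split => //; exact: fiber_nonlindelof.
have cl1 : forall f : X -> Y, continuous f -> forall c, closed (f @^-1` [set c]).
  move=> f fc c; apply: preimage_closed; first by move=> x _; exact: fc.
  exact/accessible_closed_set1/hausdorff_accessible.
split; first exact: partA.
split.
- move=> IC_ Gd f fc.
  have [_ [c nLc]] := partA f fc.
  have [U [oU UE]] := Gd c.
  apply: (EC_core UE nLc) => n.
  have cU : U n c.
    have h : (\bigcap_n U n) c by rewrite UE.
    exact: h n I.
  have clL : closed (f @^-1` (~` U n)).
    apply: preimage_closed; first by move=> x _; exact: fc.
    by rewrite closedC; exact: oU.
  have disj : (f @^-1` [set c]) `&` (f @^-1` (~` U n)) = set0.
    by apply/seteqP; split => // x [/= -> ].
  exists (f @^-1` (~` U n)); split => //.
    by case: (IC_ _ _ (cl1 f fc c) clL disj).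
  by move=> x /= nUx fx; apply: nUx; rewrite fx.
- move=> I0_ [T1 creg] Gd f fc.
  have [_ [c nLc]] := partA f fc.
  have [U [oU UE]] := Gd c.
  apply: (EC_core UE nLc) => n.
  have cU : U n c.
    have h : (\bigcap_n U n) c by rewrite UE.
    exact: h n I.
  have clU : closed (~` U n) by rewrite closedC; exact: oU.
  have [g [gc g01 gc0 g1]] := creg (~` U n) c clU (fun h => h cU).
  pose Z1 := (fun x => 1 - g (f x))%R @^-1` [set 0%R].
  pose Z0 := (fun x => g (f x)) @^-1` [set 0%R].
  have zZ1 : zero_set Z1.
    exists (fun x => 1 - g (f x))%R; split => //.
      move=> x.
      have hh := (@continuousB _ Rdefinitions.R^o _ (fun=> 1%R) (fun x => g (f x)) x
        (@cst_continuous _ _ _ x) (continuous_comp (fc x) (gc (f x)))).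
      exact hh.
    move=> x; have /andP [h1 h2] := g01 (f x).
    by apply/andP; split; lra.
  have zZ0 : zero_set Z0.
    exists (fun x => g (f x)); split => //.
    move=> x; exact: (continuous_comp (fc x) (gc (f x))).
  have disj : Z0 `&` Z1 = set0.
    apply/seteqP; split => // x [h0 h1].
    have e0 : g (f x) = 0%R := h0.
    have e1 : (1 - g (f x) = 0)%R := h1.
    by move: e1; rewrite e0 subr0 => /eqP; rewrite oner_eq0.
  exists Z1; split.
  - case: (I0_ _ _ zZ0 zZ1 disj) => // lZ0; exfalso; apply: nLc.
    apply: (closed_sub_lindelof (cl1 f fc c) _ lZ0).
    move=> x fx; change (g (f x) = 0%R).
    have e : f x = c := fx.
    by rewrite e; exact: gc0.
  - move=> x /= nUx; change ((1 - g (f x) = 0)%R).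
    by rewrite g1 // subrr.
  - move=> x h fx; have e1 : (1 - g (f x) = 0)%R := h.
    have e : f x = c := fx.
    by move: e1; rewrite e gc0 subr0 => /eqP; rewrite oner_eq0.
Qed.
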